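(* Let $q$ be a prime power, $1\le k$, $k+1<n\le m$, let $g_1,\dots,g_n\in\mathbb{F}_{q^m}$ be linearly independent over $\mathbb{F}_q$, and let $\mathcal{G}$ be the Gabidulin code of dimension $k$ with respect to $g_1,\dots,g_n$. Let $f(x)=x^{q^{k+1}}-a_1x^{q^k}+\sum_{i=0}^{k-1}c_ix^{q^i}$ with $a_1,c_i\in\mathbb{F}_{q^m}$, and $\sigma_f=(f(g_1),\dots,f(g_n))$. Then $\sigma_f$ is not a deep hole of $\mathcal{G}$ in the Hamming metric (i.e. $d_H(\sigma_f,\mathcal{G})\neq n-k$) if and only if there exist $k+1$ distinct elements $g_{i_1},\dots,g_{i_{k+1}}$ of $\{g_1,\dots,g_n\}$ such that $$a_1=\frac{\det\mathcal{R}_k(g_{i_1},\dots,g_{i_{k+1}})}{\det M_{k+1}(g_{i_1},\dots,g_{i_{k+1}})}.$$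
   Context: For $\beta_1,\dots,\beta_s\in\mathbb{F}_{q^m}$, the $t\times s$ Moore matrix $M_t(\beta_1,\dots,\beta_s)$ has $(i,j)$ entry $\beta_j^{q^{i-1}}$, $1\le i\le t$. $\mathcal{R}_k(\beta_1,\dots,\beta_{k+1})$ is the $(k+1)\times(k+1)$ matrix obtained from $M_{k+2}(\beta_1,\dots,\beta_{k+1})$ by deleting the row $(\beta_1^{q^k},\dots,\beta_{k+1}^{q^k})$. $\mathcal{L}_q(x,\mathbb{F}_{q^m})$ is the set of $q$-linearized polynomials $\sum_i a_ix^{q^i}$ over $\mathbb{F}_{q^m}$, with $q$-degree the largest $i$ with $a_i\ne0$. $d_H$ is Hamming distance, $d_H(\mathbf{u},C)=\min_{\mathbf{c}\in C}d_H(\mathbf{u},\mathbf{c})$; a deep hole in the Hamming metric is a word attaining the maximum of $d_H(\cdot,C)$, which for $\mathcal{G}$ is $n-k$. The Gabidulin code of dimension $k$ is $\mathcal{G}=\{(v(g_1),\dots,v(g_n)) : v\in\mathcal{L}_q(x,\mathbb{F}_{q^m}),\ v=0\text{ or }\deg_q(v)<k\}$. *)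

(* Defs.v *)
From HB Require Import structures.
From mathcomp Require Import all_boot all_order all_algebra all_field.
Set Implicit Arguments. Unset Strict Implicit. Unset Printing Implicit Defensive.
Import GRing.Theory.
Local Open Scope ring_scope.

Definition prime_power (q : nat) : Prop :=
  exists p e : nat, [/\ prime p, (0 < e)%N & q = (p ^ e)%N].

(* F_q-linear independence of g_1..g_n in L, where F_q = {x | x^q = x}
   is the subfield of order q of L (|L| = q^m). *)
Definition Fq_lin_indep (L : fieldType) (q n : nat) (g : 'I_n -> L) : Prop :=
  forall c : 'I_n -> L, (forall i, c i ^+ q = c i) ->
    \sum_(i < n) c i * g i = 0 -> forall i, c i = 0.

Definition linev (L : fieldType) (q k : nat) (a : 'I_k -> L) (x : L) : L :=
  \sum_(i < k) a i * x ^+ (q ^ nat_of_ord i)%N.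

Definition dH (L : fieldType) (n : nat) (u v : 'I_n -> L) : nat :=
  #|[set i : 'I_n | u i != v i]|.

(* Gabidulin codeword for v = sum_{i<k} a_i x^{q^i} (covers v = 0 or deg_q v < k) *)
Definition gab_word (L : fieldType) (q k n : nat) (g : 'I_n -> L)
  (a : 'I_k -> L) : 'I_n -> L := fun j => linev q a (g j).

Definition dH_gab (L : finFieldType) (q k n : nat) (g : 'I_n -> L)
  (u : 'I_n -> L) : nat :=
  \big[minn/n]_(a : {ffun 'I_k -> L}) dH u (gab_word q g a).

Definition moore (L : fieldType) (q t s : nat) (b : 'I_s -> L) : 'M[L]_(t, s) :=
  \matrix_(i < t, j < s) b j ^+ (q ^ nat_of_ord i)%N.

(* R_k(b_1..b_{k+1}): M_{k+2} with the row of exponent q^k deleted *)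
Definition moore_R (L : fieldType) (q k : nat) (b : 'I_k.+1 -> L) : 'M[L]_k.+1 :=
  \matrix_(i < k.+1, j < k.+1) b j ^+ (q ^ (if (nat_of_ord i < k)%N then nat_of_ord i else k.+1))%N.

Definition fpoly (L : fieldType) (q k : nat) (a1 : L) (c : 'I_k -> L) (x : L) : L :=
  x ^+ (q ^ k.+1) - a1 * x ^+ (q ^ k) + linev q c x.

(* Main.v *)
Require Import Defs.
From HB Require Import structures.
From mathcomp Require Import all_boot all_order all_algebra all_field.
From mathcomp Require Import ring zify.
Import GRing.Theory.
Local Open Scope ring_scope.

Lemma frob_sum (L : fieldType) (q t : nat) (F : 'I_t -> L) :
  (0 < q)%N -> (forall x y : L, (x + y) ^+ q = x ^+ q + y ^+ q) ->
  (\sum_(i < t) F i) ^+ q = \sum_(i < t) F i ^+ q.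
Proof.
move=> q0 hf; apply: (big_morph (fun x : L => x ^+ q)) => //.
by rewrite expr0n gtn_eqF.
Qed.

Lemma kern_zero (L : fieldType) q m t (b : 'I_t -> L) :
  (0 < q)%N -> (0 < m)%N -> (forall x y : L, (x + y) ^+ q = x ^+ q + y ^+ q) ->
  (forall x : L, x ^+ (q ^ m) = x) -> Fq_lin_indep q b ->
  forall y : 'I_t -> L, (forall i, \sum_(j < t) y j * b j ^+ (q ^ i) = 0) ->
  forall j, y j = 0.
Proof.
move=> q0 m0 hf hp hb.
suff H: forall N (y : 'I_t -> L), (#|[set j | y j != 0%R]| <= N)%N ->
   (forall i, \sum_(j < t) y j * b j ^+ (q ^ i) = 0) -> forall j, y j = 0.
  by move=> y; apply: (H _ y (leqnn _)).
elim=> [|N IH] y hN hy j; case: (eqVneq (y j) 0) => // yj0; exfalso.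
  have : j \in [set j | y j != 0] by rewrite inE.
  by move: hN; rewrite leqn0 cards_eq0 => /eqP ->; rewrite in_set0.
pose z := fun l => y l / y j.
have hz : forall i, \sum_(l < t) z l * b l ^+ (q ^ i) = 0.
  move=> i; rewrite /z; under eq_bigr do rewrite mulrAC.
  by rewrite -mulr_suml hy mul0r.
pose w := fun l => z l ^+ q - z l.
have hw : forall i, \sum_(l < t) w l * b l ^+ (q ^ i) = 0.
  move=> i; rewrite /w; under eq_bigr do rewrite mulrBl.
  rewrite sumrB hz subr0.
  have e : (q ^ (i + m).-1 * q = q ^ m * q ^ i)%N.
    by rewrite -expnSr prednK ?addn_gt0 ?m0 ?orbT // expnD mulnC.
  transitivity ((\sum_(l < t) z l * b l ^+ (q ^ (i + m).-1)) ^+ q); last first.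
    by rewrite hz expr0n gtn_eqF.
  rewrite frob_sum //.
  by apply: eq_bigr => l _; rewrite /z !exprMn -exprM e exprM hp.
have zj : z j = 1 by rewrite /z divff.
have hwz : forall l, w l = 0 by apply: (IH w) => //;
  apply: (@leq_trans #|[set l | y l != 0] :\ j|); [apply: subset_leq_card; apply/subsetP => l;
  rewrite !inE => wl; apply/andP; split; [apply: contraNneq wl => ->; rewrite /w zj expr1n subrr |
   apply: contraNneq wl => yl; rewrite /w /z yl mul0r expr0n gtn_eqF // subrr]|
  move: hN; rewrite (cardsD1 j) inE yj0 add1n ltnS].
have hzq : forall l, z l ^+ q = z l by move=> l; apply/subr0_eq/hwz.
have := hb z hzq; move: (hz 0%N); under eq_bigr do rewrite expn0 expr1.
by move=> h /(_ h j); rewrite zj => /eqP; rewrite oner_eq0.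
Qed.

Lemma span_all (L : fieldType) q t r (b : 'I_t -> L) (e : 'I_r -> L) :
  (0 < q)%N -> (forall x y : L, (x + y) ^+ q = x ^+ q + y ^+ q) ->
  (forall j, b j ^+ (q ^ r) = \sum_(i < r) e i * b j ^+ (q ^ i)) ->
  forall N, exists f : 'I_r -> L,
    forall j, b j ^+ (q ^ N) = \sum_(i < r) f i * b j ^+ (q ^ i).
Proof.
move=> q0 hf he.
have base : forall N, (N <= r)%N -> exists f : 'I_r -> L,
    forall j, b j ^+ (q ^ N) = \sum_(i < r) f i * b j ^+ (q ^ i).
  move=> N; rewrite leq_eqVlt => /orP [/eqP -> | hN]; first by exists e.
  exists (fun i => (i == Ordinal hN)%:R) => j.
  rewrite (bigD1 (Ordinal hN)) //= eqxx mul1r big1 ?addr0 // => i hi.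
  by rewrite (negbTE hi) mul0r.
have step : forall i : 'I_r, exists f : 'I_r -> L,
    forall j, b j ^+ (q ^ i.+1) = \sum_(l < r) f l * b j ^+ (q ^ l).
  by move=> i; apply: base; exact: ltn_ord.
have [F hF] := fin_all_exists step.
elim=> [|N [f hfN]]; first exact: base.
exists (fun l => \sum_(i < r) f i ^+ q * F i l) => j.
rewrite expnSr exprM hfN frob_sum //.
under eq_bigr => i _ do rewrite exprMn -exprM -expnSr hF mulr_sumr.
rewrite exchange_big /=; apply: eq_bigr => l _; rewrite mulr_suml.
by apply: eq_bigr => i _; rewrite mulrA.
Qed.

Lemma moore_unit (L : fieldType) q m t (b : 'I_t -> L) :
  (0 < q)%N -> (0 < m)%N -> (forall x y : L, (x + y) ^+ q = x ^+ q + y ^+ q) ->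
  (forall x : L, x ^+ (q ^ m) = x) -> Fq_lin_indep q b ->
  moore q t b \in unitmx.
Proof.
move=> q0 m0 hf hp hb.
have Q : forall r, (r <= t)%N -> forall x : 'I_r -> L,
   (forall j, \sum_(i < r) x i * b j ^+ (q ^ i) = 0) -> forall i, x i = 0.
  elim=> [|r IH] hrt x hx; first by case.
  case: (eqVneq (x ord_max) 0) => [xm0 | xm0].
    have hw : forall i : 'I_r, x (widen_ord (leqnSn r) i) = 0.
      apply: IH; first exact: ltnW.
      by move=> j; move: (hx j); rewrite big_ord_recr /= xm0 mul0r addr0.
    move=> i; case: (unliftP ord_max i) => [i' -> | ->] //.
    rewrite -(hw i'); congr x; apply: val_inj; exact: lift_max.
  exfalso.
  pose e := fun i : 'I_r => - x (widen_ord (leqnSn r) i) / x ord_max.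
  have he : forall j, b j ^+ (q ^ r) = \sum_(i < r) e i * b j ^+ (q ^ i).
    move=> j; move: (hx j); rewrite big_ord_recr /= => /eqP.
    rewrite addrC addr_eq0 => /eqP h.
    rewrite /e; under eq_bigr do rewrite !mulNr mulrAC.
    by rewrite sumrN -mulr_suml -mulNr -h mulrC mulKf.
  have hrt' : (r < t)%N by [].
  pose Nm := \matrix_(i < t, j < t) (if (i < r)%N then b j ^+ (q ^ i) else 0).
  have dN : \det Nm^T == 0.
    rewrite det_tr (expand_det_row _ (Ordinal hrt')) big1 // => j _.
    by rewrite mxE /= ltnn mul0r.
  case/det0P: dN => w wnz wN.
  have hv : forall i : 'I_r, \sum_(j < t) w 0 j * b j ^+ (q ^ i) = 0.
    move=> i; have := congr1 (fun M : 'M[L]_(1,t) => M 0 (widen_ord (ltnW hrt') i)) wN.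
    rewrite /= !mxE => H; rewrite -[RHS]H; apply: eq_bigr => j _.
    by rewrite !mxE /= ltn_ord.
  have hall : forall N, \sum_(j < t) w 0 j * b j ^+ (q ^ N) = 0.
    move=> N; have [f hfN] := @span_all L q t r b e q0 hf he N.
    under eq_bigr do rewrite hfN mulr_sumr.
    rewrite exchange_big big1 // => i _.
    under eq_bigr do rewrite mulrCA.
    by rewrite -mulr_sumr hv mulr0.
  have w0 := @kern_zero L q m t b q0 m0 hf hp hb (fun j => w 0 j) hall.
  by case/eqP: wnz; apply/rowP => j; rewrite w0 mxE.
rewrite unitmxE unitfE; apply/negP => /det0P [w wnz wM].
have w0 : forall i, w 0 i = 0.
  apply: (Q t (leqnn t)) => j.
  have := congr1 (fun M : 'M[L]_(1,t) => M 0 j) wM; rewrite /= !mxE => H; rewrite -[RHS]H.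
  by apply: eq_bigr => i _; rewrite !mxE.
by case/eqP: wnz; apply/rowP => j; rewrite w0 mxE.
Qed.

Lemma indep_sub (L : fieldType) q n t (g : 'I_n -> L) (s : 'I_t -> 'I_n) :
  (0 < q)%N -> (forall x y : L, (x + y) ^+ q = x ^+ q + y ^+ q) ->
  injective s -> Fq_lin_indep q g -> Fq_lin_indep q (fun j => g (s j)).
Proof.
move=> q0 hf sinj hg c hc hs j.
pose C := fun i => \sum_(j < t) (if s j == i then c j else 0).
have Cs : forall j, C (s j) = c j.
  move=> j'; rewrite /C (bigD1 j') //= eqxx big1 ?addr0 // => l hl.
  by rewrite inj_eq // (negbTE hl).
have Cq : forall i, C i ^+ q = C i.
  move=> i; rewrite /C frob_sum //; apply: eq_bigr => l _.
  by case: ifP => _; [exact: hc | rewrite expr0n gtn_eqF].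
have sumC : \sum_(i < n) C i * g i = \sum_(j < t) c j * g (s j).
  rewrite /C; under eq_bigr do rewrite mulr_suml.
  rewrite exchange_big; apply: eq_bigr => l _.
  rewrite (bigD1 (s l)) //= eqxx big1 ?addr0 // => i hi.
  by rewrite eq_sym (negbTE hi) mul0r.
by rewrite -Cs; apply: hg => //; rewrite sumC.
Qed.

Lemma solv (L : fieldType) q k (b : 'I_k.+1 -> L) (a1 : L) (c : 'I_k -> L) :
  moore q k.+1 b \in unitmx ->
  (exists d : 'I_k -> L, forall j, fpoly q a1 c (b j) = linev q d (b j)) <->
  a1 = \det (moore_R q b) / \det (moore q k.+1 b).
Proof.
move=> hM; set M := moore q k.+1 b.
pose vr := \row_(j < k.+1) b j ^+ (q ^ k.+1).
pose x := vr *m invmx M.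
have xM : x *m M = vr by rewrite mulmxKV.
have xsum : forall j, b j ^+ (q ^ k.+1) = \sum_(i < k.+1) x 0 i * b j ^+ (q ^ i).
  move=> j; have := congr1 (fun A : 'M[L]_(1, k.+1) => A 0 j) xM.
  rewrite /= !mxE => H; rewrite -[LHS]H.
  by apply: eq_bigr => i _; congr (_ * _); rewrite /M mxE.
have detR : \det (moore_R q b) = x 0 ord_max * \det M.
  pose E := \matrix_(i < k.+1, j < k.+1) if (i < k)%N then (i == j)%:R else x 0 j.
  have RE : moore_R q b = E *m M.
    apply/matrixP => i j; rewrite mxE [RHS]mxE; case: ifP => hi.
      rewrite (bigD1 i) //= mxE hi eqxx mul1r big1 ?addr0; first by rewrite mxE.
      by move=> l hl; rewrite mxE hi eq_sym (negbTE hl) mul0r.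
    rewrite xsum; apply: eq_bigr => l _; by rewrite !mxE hi.
  rewrite RE det_mulmx; congr (_ * _); rewrite det_trig.
    rewrite big_ord_recr /= big1 ?mul1r; first by rewrite mxE /= ltnn.
    by move=> i _; rewrite mxE /= ltn_ord eqxx.
  apply/is_trig_mxP => i j hij; rewrite mxE.
  have -> : (i < k)%N by apply: (leq_trans hij); rewrite -ltnS.
  by rewrite (_ : (i == j) = false) //; apply/negbTE; rewrite -val_eqE /= ltn_eqF.
have dM : \det M != 0 by rewrite -unitfE -unitmxE.
have hw : forall i : 'I_k, widen_ord (leqnSn k) i = lift ord_max i.
  by move=> i; apply: val_inj; rewrite [RHS]lift_max.
split.
  case=> d hd.
  pose y := \row_(i < k.+1) (if unlift ord_max i is Some i' then d i' - c i' else a1).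
  have yM : y *m M = vr.
    apply/rowP => j; rewrite !mxE big_ord_recr /= !mxE unlift_none.
    move: (hd j); rewrite /fpoly /linev => /eqP; rewrite -subr_eq0 => /eqP h.
    apply/eqP; rewrite -subr_eq0 -oppr_eq0; apply/eqP; rewrite -[RHS]h.
    under eq_bigr do rewrite !mxE hw liftK lift_max mulrBl.
    rewrite sumrB /=; set S1 := \sum_(i < k) _; set S2 := \sum_(i < k) _.
    set B1 := b j ^+ _; set B2 := b j ^+ _.
    ring.
  have yx : y = x by rewrite /x -yM mulmxK.
  have := congr1 (fun A : 'M[L]_(1, k.+1) => A 0 ord_max) yx.
  rewrite /= mxE unlift_none => ->.
  by rewrite detR mulfK.
move=> ha; have ha' : a1 = x 0 ord_max by rewrite ha detR mulfK.
exists (fun i => c i + x 0 (widen_ord (leqnSn k) i)) => j.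
rewrite /fpoly /linev xsum big_ord_recr /= -ha'.
under [RHS]eq_bigr do rewrite mulrDl.
by rewrite big_split /= addrK addrC.
Qed.

Lemma dH_le_agree (L : fieldType) n t (s : 'I_t -> 'I_n) (u v : 'I_n -> L) :
  injective s -> (forall j, u (s j) = v (s j)) -> (dH u v <= n - t)%N.
Proof.
move=> sinj hs; rewrite /dH.
have sub : [set i | u i != v i] \subset ~: (s @: setT).
  apply/subsetP => i; rewrite !inE; apply: contra => /imsetP [j _ ->].
  by rewrite hs.
apply: (leq_trans (subset_leq_card sub)).
have e := cardsC (s @: setT); rewrite card_imset // cardsT !card_ord in e.
lia.
Qed.

Lemma agree_of_lt (L : fieldType) n t (u v : 'I_n -> L) :
  (dH u v < n - t)%N ->
  exists s : 'I_t.+1 -> 'I_n, injective s /\ forall j, u (s j) = v (s j).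
Proof.
move=> h; set A := [set i | u i == v i].
have cA : (t < #|A|)%N.
  have e := cardsC A; rewrite card_ord in e.
  have e2 : #|~: A| = dH u v by rewrite /dH; apply: eq_card => i; rewrite !inE.
  lia.
have n0 : (0 < n)%N by lia.
pose i0 := Ordinal n0.
have hj : forall j : 'I_t.+1, (j < size (enum A))%N.
  by move=> j; rewrite -cardE; apply: (leq_trans (ltn_ord j)).
exists (fun j : 'I_t.+1 => nth i0 (enum A) j); split.
  move=> j1 j2 /eqP; rewrite nth_uniq ?enum_uniq // => /eqP h12.
  exact: val_inj.
move=> j; have : nth i0 (enum A) j \in A by rewrite -mem_enum mem_nth.
by rewrite inE => /eqP.
Qed.

Lemma bigmin_le (T : finType) n (F : T -> nat) a :
  (\big[minn/n]_(x : T) F x <= F a)%N.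
Proof.
have : forall s, a \in s -> (\big[minn/n]_(x <- s) F x <= F a)%N.
  elim=> // x s IH; rewrite inE big_cons => /orP [/eqP -> | h].
    exact: geq_minl.
  exact: leq_trans (geq_minr _ _) (IH h).
by apply; rewrite mem_index_enum.
Qed.

Lemma bigmin_lt (T : finType) n N (F : T -> nat) : (N <= n)%N ->
  (\big[minn/n]_(x : T) F x < N)%N -> exists a, (F a < N)%N.
Proof.
move=> hN; apply: (big_ind (fun x => (x < N)%N -> exists a, (F a < N)%N)).
- by move=> h; exfalso; lia.
- move=> x y hx hy; rewrite /minn; case: ifP => _; [exact: hx | exact: hy].
- by move=> a _ h; exists a.
Qed.

Theorem lemma4 (L : finFieldType) (q m k n : nat)
  (hq : prime_power q) (hL : #|L| = (q ^ m)%N)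
  (hk : (1 <= k)%N) (hkn : (k.+1 < n)%N) (hnm : (n <= m)%N)
  (g : 'I_n -> L) (hg : Fq_lin_indep q g)
  (a1 : L) (c : 'I_k -> L) :
  let sigma := fun j : 'I_n => fpoly q a1 c (g j) in
  dH_gab q k g sigma <> (n - k)%N <->
  exists s : 'I_k.+1 -> 'I_n, injective s /\
    a1 = \det (moore_R q (fun j => g (s j))) /
         \det (moore q k.+1 (fun j => g (s j))).
Proof.
move=> sigma.
have [p [e [pp e0 qe]]] := hq.
have q0 : (0 < q)%N by rewrite qe expn_gt0 prime_gt0.
have m0 : (0 < m)%N by lia.
have pL : p \in [pchar L].
  by apply: (@card_finPcharP L p (e * m)) => //; rewrite hL qe expnM.
have hf : forall x y : L, (x + y) ^+ q = x ^+ q + y ^+ q.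
  move=> x y; apply: exprDn_pchar.
  by rewrite (eq_pnat _ (pcharf_eq pL)) qe pnatX pnat_id.
have hp : forall x : L, x ^+ (q ^ m) = x by move=> x; rewrite -hL expf_card.
have munit : forall t (s : 'I_t -> 'I_n), injective s ->
    moore q t (fun j => g (s j)) \in unitmx.
  move=> t s sinj; apply: (@moore_unit L q m) => //.
  exact: indep_sub.
rewrite /dH_gab.
set D := \big[minn/n]_(a : {ffun 'I_k -> L}) _.
have gabE : forall (d : 'I_k -> L) j,
    gab_word q g [ffun i => d i] j = linev q d (g j).
  by move=> d j; rewrite /gab_word /linev; apply: eq_bigr => i _; rewrite ffunE.
have F1 : (D <= n - k)%N.
  have hkn' : (k <= n)%N by lia.
  pose s0 := fun i : 'I_k => widen_ord hkn' i.
  have s0inj : injective s0 by move=> i j h; apply: val_inj; exact: (congr1 val h).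
  pose M0 := moore q k (fun j => g (s0 j)).
  pose w := \row_(j < k) fpoly q a1 c (g (s0 j)).
  pose z := w *m invmx M0.
  have zM : z *m M0 = w by rewrite mulmxKV // munit.
  apply: (leq_trans (bigmin_le _ _ _ [ffun i => z 0 i])).
  apply: (@dH_le_agree _ _ _ _ _ _ s0inj) => j; rewrite gabE /sigma.
  have := congr1 (fun A : 'M[L]_(1, k) => A 0 j) zM.
  rewrite /= mxE [RHS]mxE => <-; rewrite /linev.
  by apply: eq_bigr => i _; congr (_ * _); rewrite /M0 mxE.
split.
  move=> hD; have hlt : (D < n - k)%N by lia.
  have [a ha] := @bigmin_lt _ _ _ _ (leq_subr k n) hlt.
  have [s [sinj hs]] := @agree_of_lt _ _ _ _ _ ha.
  exists s; split => //.
  apply/(@solv _ _ _ _ a1 c (munit _ _ sinj)); exists (fun i => a i) => j.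
  exact: hs.
case=> s [sinj ha].
have [d hd] := (iffRL (@solv _ _ _ _ a1 c (munit _ _ sinj))) ha.
have : (D <= n - k.+1)%N.
  apply: (leq_trans (bigmin_le _ _ _ [ffun i => d i])).
  by apply: (@dH_le_agree _ _ _ _ _ _ sinj) => j; rewrite gabE /sigma hd.
lia.
Qed.
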